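(* Let $\{P^{[s,t]}_{ij,k}\}$, with initial point $x^{(0)}\in S$, be a discrete time quadratic stochastic process of type (A) or of type (B). For integers $0\le m<n$ and $i,j\in\mathbb{N}$ define $\mathbb{H}^{m,n}_{ij}=\sum_{l=1}^\infty P^{[m,n]}_{il,j}x^{(m)}_l$. Then each $(\mathbb{H}^{m,n}_{ij})_{i,j}$ is a stochastic matrix and the family $\{\mathbb{H}^{m,n}_{ij}\}$ is a Markov process, i.e. $\mathbb{H}^{m,l}_{ij}=\sum_{k=1}^\infty \mathbb{H}^{m,n}_{ik}\mathbb{H}^{n,l}_{kj}$ for all $m<n<l$ and all $i,j\in\mathbb{N}$.
   Context: $\mathbb{N}=\{1,2,\dots\}$; times are nonnegative integers. $\ell^1$ is the space of real sequences $x=(x_n)_{n\in\mathbb{N}}$ with $\|x\|_1=\sum_n|x_n|<\infty$, and $S=\{x\in\ell^1:x_n\ge0,\ \|x\|_1=1\}$. A discrete time quadratic stochastic process (q.s.p.) consists of an initial point $x^{(0)}=(x^{(0)}_n)\in S$ and numbers $P^{[s,t]}_{ij,k}$ ($i,j,k\in\mathbb{N}$; $s,t$ nonnegative integers with $t-s\ge1$) such that for all $s,t$: (1) $P^{[s,t]}_{ij,k}=P^{[s,t]}_{ji,k}$; (2) $P^{[s,t]}_{ij,k}\ge0$ and $\sum_{k=1}^\infty P^{[s,t]}_{ij,k}=1$; and (3) one of the following holds for all $s<r<t$ and all $i,j,k$: type (A): $P^{[s,t]}_{ij,k}=\sum_{m,l=1}^\infty P^{[s,r]}_{ij,m}P^{[r,t]}_{ml,k}x^{(r)}_l$;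 type (B): $P^{[s,t]}_{ij,k}=\sum_{m,l,g,h=1}^\infty P^{[s,r]}_{im,l}P^{[s,r]}_{jg,h}P^{[r,t]}_{lh,k}x^{(s)}_m x^{(s)}_g$. Here for $r\ge1$, $x^{(r)}_k=\sum_{i,j=1}^\infty P^{[0,r]}_{ij,k}x^{(0)}_ix^{(0)}_j$. A matrix is stochastic if its entries are nonnegative and each row sums to 1. *)

(* Defs.v *)
From Stdlib Require Import Reals.
From Coquelicot Require Import Coquelicot.
Open Scope R_scope.

(* Indices: the paper's index set N = {1,2,...} is relabelled as nat = {0,1,...}
   (i <-> i+1).  A q.s.p. is given by a total function
   P s t i j k  standing for  P^{[s,t]}_{ij,k}; only its values for s < t
   are constrained / used. *)

Definition cube := nat -> nat -> nat -> nat -> nat -> R.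

Definition in_simplex (x : nat -> R) : Prop :=
  (forall n, 0 <= x n) /\ is_series x 1.

Definition xr (P : cube) (x0 : nat -> R) (r : nat) (k : nat) : R :=
  match r with
  | O => x0 k
  | S _ => Series (fun i => Series (fun j => P O r i j k * x0 i * x0 j))
  end.

Definition typeA (P : cube) (x0 : nat -> R) : Prop :=
  forall s r t, (s < r)%nat -> (r < t)%nat -> forall i j k,
    P s t i j k =
    Series (fun m => Series (fun l => P s r i j m * P r t m l k * xr P x0 r l)).

Definition typeB (P : cube) (x0 : nat -> R) : Prop :=
  forall s r t, (s < r)%nat -> (r < t)%nat -> forall i j k,
    P s t i j k =
    Series (fun m => Series (fun l => Series (fun g => Series (fun h =>
      P s r i m l * P s r j g h * P r t l h k * xr P x0 s m * xr P x0 s g)))).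

Definition is_qsp (P : cube) (x0 : nat -> R) : Prop :=
  in_simplex x0 /\
  (forall s t i j k, (s < t)%nat -> P s t i j k = P s t j i k) /\
  (forall s t i j k, (s < t)%nat -> 0 <= P s t i j k) /\
  (forall s t i j, (s < t)%nat -> is_series (fun k => P s t i j k) 1) /\
  (typeA P x0 \/ typeB P x0).

Definition Hmat (P : cube) (x0 : nat -> R) (m n i j : nat) : R :=
  Series (fun l => P m n i l j * xr P x0 m l).

Definition stochastic (A : nat -> nat -> R) : Prop :=
  (forall i j, 0 <= A i j) /\ (forall i, is_series (fun j => A i j) 1).

(* Main.v *)
Require Import Defs.
From Stdlib Require Import Reals.
From Coquelicot Require Import Coquelicot.
Open Scope R_scope.
From Stdlib Require Import Reals Lra Lia.
From Coquelicot Require Import Coquelicot.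
Open Scope R_scope.

Lemma sum_n_incr (a : nat -> R) : (forall n, 0 <= a n) -> forall n, sum_n a n <= sum_n a (S n).
Proof. intros H n. rewrite sum_Sn. unfold plus; simpl. specialize (H (S n)). lra. Qed.

Lemma sum_n_nonneg (a : nat -> R) : (forall n, 0 <= a n) -> forall n, 0 <= sum_n a n.
Proof. intros H n. induction n. rewrite sum_O. auto. rewrite sum_Sn. unfold plus; simpl. specialize (H (S n)). lra. Qed.

Lemma sum_le_Series (a : nat -> R) : (forall n, 0 <= a n) -> ex_series a -> forall N, sum_n a N <= Series a.
Proof.
  intros H He N. apply is_lim_seq_incr_compare.
  - apply Series_correct in He. exact He.
  - apply sum_n_incr; auto.
Qed.

Lemma term_le_Series (a : nat -> R) : (forall n, 0 <= a n) -> ex_series a -> forall N, a N <= Series a.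
Proof.
  intros H He N. eapply Rle_trans; [|apply (sum_le_Series a H He N)].
  destruct N. rewrite sum_O. lra. rewrite sum_Sn. unfold plus; simpl.
  pose proof (sum_n_nonneg a H N). lra.
Qed.

Lemma Series_nonneg (a : nat -> R) : (forall n, 0 <= a n) -> ex_series a -> 0 <= Series a.
Proof. intros H He. eapply Rle_trans; [apply (H O)|]. apply term_le_Series; auto. Qed.

Lemma ex_series_bounded (a : nat -> R) (B : R) : (forall n, 0 <= a n) -> (forall N, sum_n a N <= B) -> ex_series a.
Proof.
  intros H Hb. destruct (ex_finite_lim_seq_incr (sum_n a) B (sum_n_incr a H) Hb) as [l Hl].
  exists l. exact Hl.
Qed.

Lemma Series_sum_n (f : nat -> nat -> R) : (forall j, ex_series (fun i => f i j)) ->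
  forall M, Series (fun i => sum_n (f i) M) = sum_n (fun j => Series (fun i => f i j)) M.
Proof.
  intros He M. induction M.
  - rewrite sum_O. apply Series_ext. intros; rewrite sum_O; auto.
  - rewrite sum_Sn. rewrite <- IHM. rewrite <- Series_plus.
    + apply Series_ext. intros; rewrite sum_Sn; auto.
    +
      clear IHM. induction M.
      * eapply ex_series_ext; [|apply (He O)]. intros; rewrite sum_O; auto.
      * apply ex_series_ext with (fun i => sum_n (f i) M + f i (S M)).
        intros n. rewrite sum_Sn. reflexivity.
        apply (ex_series_plus (fun i => sum_n (f i) M) (fun i => f i (S M))); auto.
    + apply He.
Qed.

Lemma tonelli_half (f : nat -> nat -> R) : (forall i j, 0 <= f i j) ->
  (forall i, ex_series (f i)) -> ex_series (fun i => Series (f i)) ->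
  (forall j, ex_series (fun i => f i j)) /\ ex_series (fun j => Series (fun i => f i j)) /\
  Series (fun j => Series (fun i => f i j)) <= Series (fun i => Series (f i)).
Proof.
  intros H0 Hi Ho.
  assert (Hg0 : forall i, 0 <= Series (f i)) by (intros; apply Series_nonneg; auto).
  assert (Hj : forall j, ex_series (fun i => f i j)).
  { intros j. apply ex_series_bounded with (Series (fun i => Series (f i))). auto.
    intros N. eapply Rle_trans; [|apply sum_le_Series; auto].
    rewrite !sum_n_Reals. apply sum_Rle. intros i _. apply term_le_Series; auto. }
  assert (Hh0 : forall j, 0 <= Series (fun i => f i j)) by (intros; apply Series_nonneg; auto).
  assert (Hb : forall M, sum_n (fun j => Series (fun i => f i j)) M <= Series (fun i => Series (f i))).
  { intros M. rewrite <- Series_sum_n by auto. apply Series_le; auto.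
    intros i; split. apply sum_n_nonneg; auto. apply sum_le_Series; auto. }
  assert (He : ex_series (fun j => Series (fun i => f i j))) by (eapply ex_series_bounded; eauto).
  split; auto. split; auto.
  pose proof (Series_correct _ He) as Hc.
  cut (Rbar_le (Series (fun j => Series (fun i => f i j))) (Series (fun i => Series (f i)))); [simpl; auto|].
  eapply (is_lim_seq_le (sum_n (fun j => Series (fun i => f i j))) (fun _ => Series (fun i => Series (f i)))); eauto.
  apply is_lim_seq_const.
Qed.

Lemma tonelli (f : nat -> nat -> R) : (forall i j, 0 <= f i j) ->
  (forall i, ex_series (f i)) -> ex_series (fun i => Series (f i)) ->
  (forall j, ex_series (fun i => f i j)) /\
  is_series (fun j => Series (fun i => f i j)) (Series (fun i => Series (f i))).
Proof.
  intros H0 Hi Ho.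
  destruct (tonelli_half f H0 Hi Ho) as [Hj [He Hle]].
  destruct (tonelli_half (fun j i => f i j) (fun j i => H0 i j) Hj He) as [_ [_ Hle2]].
  split; auto.
  replace (Series (fun i => Series (f i))) with (Series (fun j => Series (fun i => f i j))).
  apply Series_correct; auto.
  apply Rle_antisym; auto.
Qed.

Definition prob (v : nat -> R) := (forall n, 0 <= v n) /\ is_series v 1.
Definition sub (v : nat -> R) := (forall n, 0 <= v n) /\ ex_series v /\ Series v <= 1.
Definition u01 (v : nat -> R) := forall n, 0 <= v n <= 1.

Lemma prob_sub v : prob v -> sub v.
Proof. intros [H1 H2]. split; auto. split. exists 1; auto. rewrite (is_series_unique _ _ H2). lra. Qed.

Lemma sub_Series v : sub v -> 0 <= Series v <= 1.
Proof. intros [H1 [H2 H3]]. split; auto. apply Series_nonneg; auto. Qed.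

Lemma sub_u01 v : sub v -> u01 v.
Proof. intros [H1 [H2 H3]] n. split; auto. eapply Rle_trans; [apply term_le_Series|]; eauto. Qed.

Lemma prob_u01 v : prob v -> u01 v.
Proof. intros; apply sub_u01, prob_sub; auto. Qed.

Lemma sub_ext v w : (forall n, v n = w n) -> sub v -> sub w.
Proof. intros E [H1 [H2 H3]]. split. intros n; rewrite <- E; auto. split.
  eapply ex_series_ext; eauto. rewrite <- (Series_ext _ _ E); auto. Qed.

Lemma prob_ext v w : (forall n, v n = w n) -> prob v -> prob w.
Proof. intros E [H1 H2]. split. intros n; rewrite <- E; auto. eapply is_series_ext; eauto. Qed.

Lemma sub_mulr v F : sub v -> u01 F -> sub (fun n => v n * F n).
Proof.
  intros [H1 [H2 H3]] HF.
  assert (Hn : forall n, 0 <= v n * F n <= v n).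
  { intros n. destruct (HF n). specialize (H1 n). split. nra. nra. }
  assert (He : ex_series (fun n => v n * F n)).
  { apply (ex_series_le (fun n => v n * F n) v); auto. intros n. rewrite Rnorm_abs || idtac.
    unfold norm; simpl. unfold abs; simpl. rewrite Rabs_pos_eq; apply Hn. }
  split. apply Hn. split; auto. eapply Rle_trans; [|apply H3]. apply Series_le; auto.
Qed.

Lemma prob_mulr v F : prob v -> u01 F -> sub (fun n => v n * F n).
Proof. intros; apply sub_mulr; auto; apply prob_sub; auto. Qed.

Lemma TB (a : nat -> R) (U : nat -> nat -> R) : prob a -> (forall i, sub (U i)) ->
  (forall l, ex_series (fun i => a i * U i l)) /\
  is_series (fun l => Series (fun i => a i * U i l)) (Series (fun i => a i * Series (U i))).
Proof.
  intros [Ha0 Ha] HU.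
  assert (HS : forall i, 0 <= a i * Series (U i) <= a i).
  { intros i. destruct (sub_Series _ (HU i)). specialize (Ha0 i). split; nra. }
  assert (He : ex_series (fun i => a i * Series (U i))).
  { apply (ex_series_le (fun i => a i * Series (U i)) a). intros n.
    unfold norm; simpl. unfold abs; simpl. rewrite Rabs_pos_eq; apply HS. exists 1; auto. }
  destruct (tonelli (fun i l => a i * U i l)) as [H1 H2].
  - intros i j. destruct (HU i) as [Hu _]. specialize (Hu j). specialize (Ha0 i). nra.
  - intros i. apply (ex_series_scal_l (a i) (U i)). apply HU.
  - eapply ex_series_ext; [|apply He]. intros i. simpl. rewrite Series_scal_l. auto.
  - split; auto. eapply is_series_ext in H2; [|intros; reflexivity].
    replace (Series (fun i => a i * Series (U i))) with (Series (fun i => Series (fun l => a i * U i l))); auto.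
    apply Series_ext. intros; apply Series_scal_l.
Qed.

Lemma TBeq (a : nat -> R) (U : nat -> nat -> R) : prob a -> (forall i, sub (U i)) ->
  Series (fun i => a i * Series (U i)) = Series (fun l => Series (fun i => a i * U i l)).
Proof. intros Ha HU. destruct (TB a U Ha HU) as [_ H]. symmetry. apply is_series_unique; auto. Qed.

Lemma mix_prob (a : nat -> R) (U : nat -> nat -> R) : prob a -> (forall i, prob (U i)) ->
  prob (fun l => Series (fun i => a i * U i l)).
Proof.
  intros Ha HU. destruct (TB a U Ha (fun i => prob_sub _ (HU i))) as [H1 H2].
  split.
  - intros l. apply Series_nonneg; auto. intros i. destruct Ha as [Ha _]. destruct (HU i) as [Hu _].
    specialize (Ha i); specialize (Hu l); nra.
  - replace 1 with (Series (fun i => a i * Series (U i))); auto.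

    destruct Ha as [_ Ha].
    rewrite <- (is_series_unique _ _ Ha). apply Series_ext. intros i.
    rewrite (is_series_unique _ _ (proj2 (HU i))). ring.
Qed.

Lemma mix_sub (a : nat -> R) (U : nat -> nat -> R) : prob a -> (forall i, sub (U i)) ->
  sub (fun l => Series (fun i => a i * U i l)).
Proof.
  intros Ha HU. destruct (TB a U Ha HU) as [H1 H2].
  split; [|split].
  - intros l. apply Series_nonneg; auto. intros i. destruct Ha as [Ha _]. destruct (HU i) as [Hu _].
    specialize (Ha i); specialize (Hu l); nra.
  - eexists; eauto.
  - rewrite (is_series_unique _ _ H2). destruct Ha as [Ha0 Ha].
    rewrite <- (is_series_unique _ _ Ha). apply Series_le. 2: exists 1; auto.
    intros i. destruct (sub_Series _ (HU i)). specialize (Ha0 i). split; nra.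
Qed.

Lemma ser_scal (f g : nat -> R) (c : R) : (forall n, f n = c * g n) -> Series f = c * Series g.
Proof. intros E. rewrite <- Series_scal_l. apply Series_ext; auto. Qed.

Lemma P_prob P x0 : is_qsp P x0 -> forall s t i j, (s < t)%nat -> prob (P s t i j).
Proof. intros (_ & _ & H0 & H1 & _) s t i j H. split; auto. Qed.

Lemma P_u01 P x0 : is_qsp P x0 -> forall s t i j k, (s < t)%nat -> 0 <= P s t i j k <= 1.
Proof. intros hP s t i j k H. apply (prob_u01 _ (P_prob P x0 hP s t i j H)). Qed.

Lemma xr_prob P x0 : is_qsp P x0 -> forall r, prob (Defs.xr P x0 r).
Proof.
  intros hP r. pose proof hP as (Hx & _). destruct r as [|r].
  - exact Hx.
  - eapply prob_ext; [|apply (mix_prob x0 (fun i k => Series (fun j => x0 j * P O (S r) i j k)))]; auto.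
    + intros n. simpl. apply Series_ext; intros i. symmetry. apply ser_scal. intros; ring.
    + intros i. apply mix_prob; auto. intros j. apply (P_prob P x0 hP). lia.
Qed.

Lemma H_prob P x0 : is_qsp P x0 -> forall m n i, (m < n)%nat -> prob (Hmat P x0 m n i).
Proof.
  intros hP m n i H.
  eapply prob_ext; [|apply (mix_prob (Defs.xr P x0 m) (fun l j => P m n i l j))].
  - intros j. unfold Hmat. apply Series_ext; intros; ring.
  - apply xr_prob; auto.
  - intros l. apply (P_prob P x0 hP); auto.
Qed.

Lemma H_u01 P x0 : is_qsp P x0 -> forall m n i j, (m < n)%nat -> 0 <= Hmat P x0 m n i j <= 1.
Proof. intros hP m n i j H. apply (prob_u01 _ (H_prob P x0 hP m n i H)). Qed.

Lemma markovA P x0 : is_qsp P x0 -> typeA P x0 -> forall m n l, (m < n)%nat -> (n < l)%nat -> forall i j,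
  is_series (fun k => Hmat P x0 m n i k * Hmat P x0 n l k j) (Hmat P x0 m l i j).
Proof.
  intros hP hA m n l Hmn Hnl i j.
  assert (Hrow : forall a, P m l i a j = Series (fun k => P m n i a k * Hmat P x0 n l k j)).
  { intros a. rewrite (hA m n l Hmn Hnl). apply Series_ext; intros k. unfold Hmat.
    apply ser_scal; intros; ring. }
  destruct (TB (Defs.xr P x0 m) (fun a k => P m n i a k * Hmat P x0 n l k j) (xr_prob P x0 hP m)) as [_ H].
  { intros a. apply prob_mulr. apply (P_prob P x0 hP); auto. intros k. apply (H_u01 P x0 hP); auto. }
  replace (Hmat P x0 m l i j) with (Series (fun a => Defs.xr P x0 m a * Series (fun k => P m n i a k * Hmat P x0 n l k j))).
  - eapply is_series_ext; [|exact H]. intros k. simpl.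
    transitivity (Series (fun a => P m n i a k * Defs.xr P x0 m a) * Hmat P x0 n l k j).
    rewrite <- Series_scal_r. apply Series_ext; intros; ring. reflexivity.
  - change (Hmat P x0 m l i j) with (Series (fun a => P m l i a j * Defs.xr P x0 m a)). apply Series_ext; intros a. rewrite Hrow. ring.
Qed.

Lemma XB P x0 : is_qsp P x0 -> typeB P x0 -> forall m n, (m < n)%nat -> forall k,
  Defs.xr P x0 n k = Series (fun a => Defs.xr P x0 m a * Series (fun g => Defs.xr P x0 m g * P m n a g k)).
Proof.
  intros hP hB m n Hmn k.
  destruct n as [|n']; [lia|].
  assert (Hx0 : prob x0) by exact (proj1 hP).
  destruct m as [|m'].
  - simpl. apply Series_ext; intros a. apply ser_scal; intros; ring.
  - pose (U := fun i l => Series (fun a => x0 a * P 0%nat (S m') i a l)).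
    assert (HU : forall i, prob (U i)).
    { intros i. apply mix_prob; auto. intros a. apply (P_prob P x0 hP). lia. }
    assert (Hx : forall l, Defs.xr P x0 (S m') l = Series (fun i => x0 i * U i l)).
    { intros l. simpl. apply Series_ext; intros i. unfold U. apply ser_scal; intros; ring. }
    pose (C := fun l h => P (S m') (S n') l h k).
    assert (HC : forall l h, 0 <= C l h <= 1) by (intros; apply (P_u01 P x0 hP); auto).
    pose (K := fun j l => Series (fun h => U j h * C l h)).
    assert (HK : forall j l, 0 <= K j l <= 1).
    { intros j l. apply sub_Series. apply prob_mulr; auto. intros h; apply HC. }
    assert (HK' : forall j l, Series (fun g => x0 g * Series (fun h => P 0%nat (S m') j g h * C l h)) = K j l).
    { intros j l. etransitivity; [apply (TBeq x0 (fun g h => P 0%nat (S m') j g h * C l h))|]; auto.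
      - intros g. apply prob_mulr. apply (P_prob P x0 hP); lia. intros h; apply HC.
      - apply Series_ext; intros h. unfold K, U. rewrite <- Series_scal_r. apply Series_ext; intros; ring. }
    assert (Hrow : forall i j, P 0%nat (S n') i j k = Series (fun l => U i l * K j l)).
    { intros i j. rewrite (hB 0%nat (S m') (S n') ltac:(lia) Hmn i j k).
      change (Defs.xr P x0 0) with x0.
      transitivity (Series (fun al => x0 al * Series (fun l => P 0%nat (S m') i al l * K j l))).
      - apply Series_ext; intros al. apply ser_scal; intros l.
        rewrite <- (HK' j l).
        transitivity (Series (fun g => (P 0%nat (S m') i al l * x0 al) * (x0 g * Series (fun h => P 0%nat (S m') j g h * C l h)))).
        + apply Series_ext; intros g.
          rewrite (ser_scal _ (fun h => P 0%nat (S m') j g h * C l h) (P 0%nat (S m') i al l * x0 al * x0 g)).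
          ring. intros h; unfold C; ring.
        + rewrite (ser_scal _ (fun g => x0 g * Series (fun h => P 0%nat (S m') j g h * C l h)) (P 0%nat (S m') i al l * x0 al)).
          ring. intros; ring.
      - etransitivity; [apply (TBeq x0 (fun al l => P 0%nat (S m') i al l * K j l))|]; auto.
        + intros al. apply prob_mulr. apply (P_prob P x0 hP); lia. intros l; apply HK.
        + apply Series_ext; intros l. unfold U. rewrite <- Series_scal_r. apply Series_ext; intros; ring. }
    pose (M := fun l => Series (fun j => x0 j * K j l)).
    assert (HM : forall l, M l = Series (fun h => Defs.xr P x0 (S m') h * C l h)).
    { intros l. unfold M.
      etransitivity; [apply (TBeq x0 (fun j h => U j h * C l h))|]; auto.
      - intros j. apply prob_mulr; auto. intros h; apply HC.
      - apply Series_ext; intros h. rewrite Hx. rewrite <- Series_scal_r. apply Series_ext; intros; ring. }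
    assert (HMu : forall l, 0 <= M l <= 1).
    { intros l. rewrite HM. apply sub_Series. apply prob_mulr. apply xr_prob; auto. intros h; apply HC. }
    transitivity (Series (fun i => x0 i * Series (fun l => U i l * M l))).
    { change (Defs.xr P x0 (S n') k) with (Series (fun i => Series (fun j => P 0%nat (S n') i j k * x0 i * x0 j))).
      apply Series_ext; intros i.
      transitivity (x0 i * Series (fun j => x0 j * Series (fun l => U i l * K j l))).
      - apply ser_scal; intros j; rewrite Hrow; ring.
      - f_equal. etransitivity; [apply (TBeq x0 (fun j l => U i l * K j l))|]; auto.
        + intros j. apply prob_mulr; auto. intros l; apply HK.
        + apply Series_ext; intros l. unfold M. rewrite <- Series_scal_l. apply Series_ext; intros; ring. }
    etransitivity; [apply (TBeq x0 (fun i l => U i l * M l))|]; auto.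
    + intros i. apply prob_mulr; auto.
    + apply Series_ext; intros l. 
      transitivity (Defs.xr P x0 (S m') l * M l).
      * rewrite Hx. rewrite <- Series_scal_r. apply Series_ext; intros; ring.
      * rewrite HM. f_equal; try (apply Series_ext; intros; unfold C; ring).
Qed.

Lemma markovB P x0 : is_qsp P x0 -> typeB P x0 -> forall m n l, (m < n)%nat -> (n < l)%nat -> forall i j,
  is_series (fun k => Hmat P x0 m n i k * Hmat P x0 n l k j) (Hmat P x0 m l i j).
Proof.
  intros hP hB m n l Hmn Hnl i j.
  pose (x := Defs.xr P x0 m).
  assert (Hx : prob x) by (apply xr_prob; auto).
  pose (Q := fun d h => P n l d h j).
  assert (HQ : forall d h, 0 <= Q d h <= 1) by (intros; apply (P_u01 P x0 hP); auto).
  pose (Z := fun a h => Series (fun g => x g * P m n a g h)).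
  assert (HZ : forall a, prob (Z a)).
  { intros a. apply mix_prob; auto. intros g. apply (P_prob P x0 hP); auto. }
  pose (K := fun a d => Series (fun h => Z a h * Q d h)).
  assert (HK : forall a d, 0 <= K a d <= 1).
  { intros a d. apply sub_Series. apply prob_mulr; auto. intros h; apply HQ. }
  assert (HK' : forall a d, Series (fun g => x g * Series (fun h => P m n a g h * Q d h)) = K a d).
  { intros a d. etransitivity; [apply (TBeq x (fun g h => P m n a g h * Q d h))|]; auto.
    - intros g. apply prob_mulr. apply (P_prob P x0 hP); lia. intros h; apply HQ.
    - apply Series_ext; intros h. unfold K, Z. rewrite <- Series_scal_r. apply Series_ext; intros; ring. }
  assert (Hrow : forall a, P m l i a j = Series (fun d => Hmat P x0 m n i d * K a d)).
  { intros a. rewrite (hB m n l Hmn Hnl i a j). fold x.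
    transitivity (Series (fun c => x c * Series (fun d => P m n i c d * K a d))).
    - apply Series_ext; intros c. apply ser_scal; intros d.
      rewrite <- (HK' a d).
      transitivity (Series (fun g => (P m n i c d * x c) * (x g * Series (fun h => P m n a g h * Q d h)))).
      + apply Series_ext; intros g.
        rewrite (ser_scal _ (fun h => P m n a g h * Q d h) (P m n i c d * x c * x g)).
        ring. intros h; unfold Q; ring.
      + rewrite (ser_scal _ (fun g => x g * Series (fun h => P m n a g h * Q d h)) (P m n i c d * x c)).
        ring. intros; ring.
    - etransitivity; [apply (TBeq x (fun c d => P m n i c d * K a d))|]; auto.
      + intros c. apply prob_mulr. apply (P_prob P x0 hP); lia. intros d; apply HK.
      + apply Series_ext; intros d. unfold Hmat. rewrite <- Series_scal_r. apply Series_ext; intros; unfold x; ring. }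
  destruct (TB x (fun a d => Hmat P x0 m n i d * K a d) Hx) as [_ H].
  { intros a. apply prob_mulr. apply H_prob; auto. intros d; apply HK. }
  replace (Hmat P x0 m l i j) with (Series (fun a => x a * Series (fun d => Hmat P x0 m n i d * K a d))).
  - eapply is_series_ext; [|exact H]. intros d. simpl.
    rewrite (ser_scal _ (fun a => x a * K a d) (Hmat P x0 m n i d)) by (intros; ring).
    f_equal.
    etransitivity; [apply (TBeq x (fun a h => Z a h * Q d h))|]; auto.
    + intros a. apply prob_mulr; auto. intros h; apply HQ.
    + change (Hmat P x0 n l d j) with (Series (fun h => P n l d h j * Defs.xr P x0 n h)).
      apply Series_ext; intros h. rewrite (XB P x0 hP hB m n Hmn h).
      rewrite <- (Series_scal_l (P n l d h j)). apply Series_ext; intros a. unfold Z, Q, x. ring.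
  - change (Hmat P x0 m l i j) with (Series (fun a => P m l i a j * x a)). apply Series_ext; intros a. rewrite Hrow. ring.
Qed.

Theorem lemma2p3 (P : cube) (x0 : nat -> R) (hP : is_qsp P x0) :
  (forall m n, (m < n)%nat -> stochastic (Hmat P x0 m n)) /\
  (forall m n l, (m < n)%nat -> (n < l)%nat -> forall i j,
     is_series (fun k => Hmat P x0 m n i k * Hmat P x0 n l k j)
               (Hmat P x0 m l i j)).
Proof.
  split.
  - intros m n H. split.
    + intros i j. apply (H_prob P x0 hP m n i H).
    + intros i. apply (H_prob P x0 hP m n i H).
  - pose proof hP as (_ & _ & _ & _ & [hA | hB]).
    + apply markovA; auto.
    + apply markovB; auto.
Qed.
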